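(* Let $\Bbbk$ be algebraically closed, $S:\mathbb G_m\to GL(V)$ a linear action on a finite-dimensional $\Bbbk$-vector space $V$, and $X\subseteq\mathbb PV$ a closed $S$-invariant subscheme. Let $b\in V^*$, regarded as an element of $\Gamma(X;\mathcal O(1))$, be an $S$-weight vector of weight $k\in\mathbb Z$, and let $f\in X^S$, with $\Phi_S(f)\in\mathbb Z$ the weight of $S$ on $\mathcal O(1)|_f$. Then: (i) if $k>\Phi_S(f)$, then $b$ vanishes at $f$; (ii) if $k<\Phi_S(f)$, then $b$ vanishes on all of $\overline{X_f}$; (iii) if $k=\Phi_S(f)$, then the restriction of $b$ to $\overline{X_f}$ is unique up to scale (any two $S$-weight vectors of weight $\Phi_S(f)$ have proportional restrictions to $\overline{X_f}$); (iv) if $b$ does not vanish at $f$ (so $k=\Phi_S(f)$), then $b$ does not vanish at any point of $X_f$.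
   Context: $X_f=\{x\in X:\lim_{z\to0}S(z)\cdot x=f\}$ is the Białynicki-Birula stratum of $f$, and $\overline{X_f}$ its Zariski closure. *)

(* Defs.v *)
From HB Require Import structures.
From mathcomp Require Import all_boot all_order all_algebra.
From mathcomp Require Import mpoly.
Set Implicit Arguments. Unset Strict Implicit. Unset Printing Implicit Defensive.
Import Order.TTheory GRing.Theory Num.Theory.
Local Open Scope ring_scope.

(* V = k^n, vectors are row vectors 'rV[k]_n; a point of PV is
   represented by a nonzero vector (all predicates below are scale-invariant).
   The group G_m acts through  v |-> v *m S z  (z : k, z != 0).              *)

Section Defs.
Variables (k : fieldType) (n : nat).

(* A morphism of algebraic groups S : G_m -> GL(V): the matrix entries are
   Laurent polynomials in z, S 1 = 1, and S is multiplicative on k^x. *)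
Definition gm_action (S : k -> 'M[k]_n) : Prop :=
  [/\ exists (N : nat) (P : 'M[{poly k}]_n),
        forall z, z != 0 -> S z = z ^- N *: map_mx (fun p => p.[z]) P,
      S 1 = 1
    & forall z w, z != 0 -> w != 0 -> S (z * w) = S z *m S w].

Definition vfun (v : 'rV[k]_n) : 'I_n -> k := fun i => v 0 i.

(* Zariski closed subsets of PV (as cones of nonzero vectors): common zero
   loci of families of homogeneous polynomials. *)
Definition proj_closed (Z : 'rV[k]_n -> Prop) : Prop :=
  exists P : {mpoly k[n]} -> Prop,
    (forall p, P p -> exists d, p \is d.-homog) /\
    (forall v, Z v <-> (v != 0 /\ forall p, P p -> p.@[vfun v] = 0)).

Definition zclosure (A : 'rV[k]_n -> Prop) : 'rV[k]_n -> Prop :=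
  fun v => v != 0 /\ forall Z, proj_closed Z -> (forall w, A w -> Z w) -> Z v.

Definition S_invariant (S : k -> 'M[k]_n) (X : 'rV[k]_n -> Prop) : Prop :=
  forall z v, z != 0 -> X v -> X (v *m S z).

Definition S_fixed (S : k -> 'M[k]_n) (f : 'rV[k]_n) : Prop :=
  f != 0 /\ forall z, z != 0 -> exists c : k, f *m S z = c *: f.

Definition proj_eq (x y : 'rV[k]_n) : Prop :=
  x != 0 /\ y != 0 /\ exists c : k, c != 0 /\ x = c *: y.

(* lim_{z -> 0} S(z).x = f in PV: the orbit map z |-> [x S(z)] extends over
   z = 0 (i.e. x S(z) = z^m q(z) with q a polynomial vector, q(0) != 0)
   and its value at 0 is f. *)
Definition bb_lim (S : k -> 'M[k]_n) (x f : 'rV[k]_n) : Prop :=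
  exists (m : int) (q : 'rV[{poly k}]_n),
    proj_eq (map_mx (fun p => p.[0]) q) f /\
    forall z, z != 0 -> x *m S z = (z ^ m) *: map_mx (fun p => p.[z]) q.

Definition bb_stratum (S : k -> 'M[k]_n) (X : 'rV[k]_n -> Prop) (f : 'rV[k]_n)
  : 'rV[k]_n -> Prop := fun x => X x /\ x != 0 /\ bb_lim S x f.

Definition lform (b : 'cV[k]_n) (v : 'rV[k]_n) : k := (v *m b) 0 0.

Definition weight_vector (S : k -> 'M[k]_n) (b : 'cV[k]_n) (w : int) : Prop :=
  forall z, z != 0 -> S z *m b = (z ^ w) *: b.

(* Phi is the weight of S on O(1)|_f, for f fixed, with the convention
   matching weight_vector: a linear form on the line f has weight Phi iff
   f S(z) = z^Phi f. *)
Definition weight_at (S : k -> 'M[k]_n) (f : 'rV[k]_n) (Phi : int) : Prop :=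
  forall z, z != 0 -> f *m S z = (z ^ Phi) *: f.

End Defs.

(* Main.v *)
Require Import Defs.
From HB Require Import structures.
From mathcomp Require Import all_boot all_order all_algebra.
From mathcomp Require Import mpoly.
Import Order.TTheory GRing.Theory Num.Theory.
Local Open Scope ring_scope.

Lemma nz_vanish (k : closedFieldType) (p : {poly k}) :
  (forall z, z != 0 -> p.[z] = 0) -> p = 0.
Proof.
move=> h; apply/eqP; apply: contraT => p0.
have: size (p * 'X + 1) != 1%N.
  rewrite size_polyDl size_mulX // ?eqSS ?size_poly_eq0 //.
  by rewrite -polyC1 size_polyC oner_eq0 ltnS lt0n size_poly_eq0.
move/closed_rootP => [z]; rewrite /root !hornerE.
have [->|z0] := eqVneq z 0; first by rewrite mulr0 add0r oner_eq0.
by rewrite h // mul0r add0r oner_eq0.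
Qed.

Lemma pow_ne (k : closedFieldType) (e : nat) : (0 < e)%N ->
  ~ (forall y : k, y != 0 -> y ^+ e = 1).
Proof.
move=> e0 h.
have : ('X^e - 1%:P : {poly k}) = 0.
  by apply: nz_vanish => z z0; rewrite !hornerE h // subrr.
move=> H; have := @size_XnsubC k e 1 e0; rewrite H size_poly0.
by [].
Qed.

Lemma int_eq (k : closedFieldType) (a b : int) :
  (forall y : k, y != 0 -> y ^ a = y ^ b) -> a = b.
Proof.
wlog ab : a b / a <= b.
  move=> H h; case: (lerP a b) => [ab|ba]; first exact: H.
  by apply/esym/H; [exact: ltW| move=> y y0; rewrite h].
move=> h; case: (ltgtP a b) ab => // ab _; exfalso.
have d0 : 0 < b - a by rewrite subr_gt0.
have eb : b = a + (b - a) by rewrite addrC subrK.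
move: d0 h; rewrite {}eb; case: (b - a) => // e e0 h.
have e0' : (0 < e)%N.
  by move: e0; rewrite addrC addKr (ltz_nat 0).
apply: (@pow_ne k e e0') => y y0.
have := h y y0; rewrite expfzDr // -exprnP => /eqP.
rewrite -{1}(mulr1 (y ^ a)) => /eqP /mulfI -> //.
exact: expfz_neq0.
by move: e0; rewrite addrC addKr.
Qed.

Lemma row_nz (k : fieldType) n (f : 'rV[k]_n) : f != 0 -> exists j, f 0 j != 0.
Proof.
move=> f0; have : [exists j, f 0 j != 0].
  apply: contraR f0 => /existsPn h; apply/eqP/matrixP => i j.
  by rewrite ord1 mxE; apply/eqP; rewrite -[_ == _]negbK h.
by case/existsP => j; exists j.
Qed.

Lemma strat_form (k : closedFieldType) n (S : k -> 'M[k]_n) f Phi x :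
 gm_action S -> S_fixed S f -> weight_at S f Phi -> bb_lim S x f ->
 exists (c : k) (q : 'rV[{poly k}]_n), c != 0 /\ map_mx (fun p => p.[0]) q = c *: f /\
   forall z, z != 0 -> x *m S z = z ^ Phi *: map_mx (fun p => p.[z]) q.
Proof.
move=> [_ _ Smul] [f0 _] wf [m [q [[_ [_ [c [c0 Qc]]]] hx]]].
exists c, q; split => //; split => //.
suff <- : m = Phi by [].
apply: int_eq => y y0.
have key : map_mx (fun p => p.[0]) q *m S y = y ^ m *: map_mx (fun p => p.[0]) q.
  apply/matrixP => i j; rewrite ord1 {i} !mxE.
  pose P := y ^ m *: (q 0 j \Po (y *: 'X)) - \sum_i q 0 i * (S y i j)%:P.
  have Pz z : P.[z] = y ^ m * (q 0 j).[y * z] - \sum_i (q 0 i).[z] * S y i j.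
    rewrite /P hornerD hornerN hornerZ horner_comp horner_sum hornerZ hornerX.
    by congr (_ - _); apply: eq_bigr => i _; rewrite hornerM hornerC.
  have P0 : P = 0.
    apply: nz_vanish => z z0.
    have zy0 : z * y != 0 by rewrite mulf_neq0.
    have E := hx _ zy0.
    rewrite Smul // mulmxA hx // -scalemxAl expfzMl in E.
    move/matrixP/(_ 0 j): E; rewrite !mxE => E.
    apply: (mulfI (expfz_neq0 m z0)); rewrite mulr0 Pz mulrBr mulrA [y * z]mulrC -E.
    by apply/eqP; rewrite subr_eq0; apply/eqP; congr (_ * _); apply: eq_bigr => i _; rewrite mxE.
  have := Pz 0; rewrite P0 horner0 mulr0 => /esym/eqP; rewrite subr_eq0 => /eqP.
  by move=> ->; apply: eq_bigr => i _; rewrite mxE.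
rewrite Qc -scalemxAl wf // in key.
have [j fj] := @row_nz _ _ f f0.
move/matrixP/(_ 0 j): key; rewrite !mxE => key.
apply: (mulfI c0); apply: (mulIf fj).
by rewrite -!mulrA key mulrCA.
Qed.

Lemma lin_closed (k : fieldType) (n : nat) (b : 'cV[k]_n) :
  proj_closed (fun v => v != 0 /\ lform b v = 0).
Proof.
exists (fun p => p = \sum_(i < n) b i 0 *: 'X_i); split.
  move=> p ->; exists 1%N; apply: rpred_sum => i _; apply: rpredZ.
  by rewrite dhomogX; apply/eqP; apply: mdeg1.
move=> v; split.
  move=> [v0 bv]; split => // p ->; rewrite -bv /lform mxE raddf_sum /=.
  by apply: eq_bigr => i _; rewrite mevalZ mevalXU /vfun mulrC.
move=> [v0 h]; split => //; rewrite -(h _ erefl) /lform mxE raddf_sum /=.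
by apply: eq_bigr => i _; rewrite mevalZ mevalXU /vfun mulrC.
Qed.

Lemma lformZ (k : fieldType) n (b : 'cV[k]_n) a v : lform b (a *: v) = a * lform b v.
Proof. by rewrite /lform -scalemxAl mxE. Qed.

Lemma lformS (k : fieldType) n (S : k -> 'M[k]_n) b w v z :
  weight_vector S b w -> z != 0 -> lform b (v *m S z) = z ^ w * lform b v.
Proof. by move=> hb z0; rewrite /lform -mulmxA hb // -scalemxAr mxE. Qed.

Lemma lformQ (k : fieldType) n (b : 'cV[k]_n) (q : 'rV[{poly k}]_n) z :
  lform b (map_mx (fun p => p.[z]) q) = (\sum_i q 0 i * (b i 0)%:P).[z].
Proof.
rewrite /lform mxE horner_sum; apply: eq_bigr => i _.
by rewrite mxE hornerM hornerC.
Qed.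

Lemma strat_b (k : closedFieldType) n (S : k -> 'M[k]_n) f Phi x b w :
 gm_action S -> S_fixed S f -> weight_at S f Phi -> bb_lim S x f ->
 weight_vector S b w ->
 exists (c : k) (g : {poly k}), c != 0 /\ g.[0] = c * lform b f /\
   forall z, z != 0 -> z ^ w * lform b x = z ^ Phi * g.[z].
Proof.
move=> gS fS wf bl hb.
have [c [q [c0 [Qc hx]]]] := @strat_form _ _ _ _ _ _ gS fS wf bl.
exists c, (\sum_i q 0 i * (b i 0)%:P); split => //; split.
  by rewrite -lformQ Qc lformZ.
move=> z z0; rewrite -(@lformS _ _ S b w x z hb z0) hx // lformZ lformQ //.
Qed.

Lemma lform_lin (k : fieldType) n (b b' : 'cV[k]_n) lam mu v :
  lform (lam *: b + mu *: b') v = lam * lform b v + mu * lform b' v.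
Proof. by rewrite /lform mulmxDr -!scalemxAr !mxE. Qed.

Lemma wv_lin (k : fieldType) n (S : k -> 'M[k]_n) (b b' : 'cV[k]_n) lam mu w :
  weight_vector S b w -> weight_vector S b' w ->
  weight_vector S (lam *: b + mu *: b') w.
Proof.
move=> h h' z z0; rewrite mulmxDr -!scalemxAr h // h' //.
by rewrite scalerDr !scalerA mulrC [_ * mu]mulrC.
Qed.

Lemma closure_sub (k : fieldType) n (A : 'rV[k]_n -> Prop) b :
  (forall x, A x -> x != 0 /\ lform b x = 0) ->
  forall x, zclosure A x -> lform b x = 0.
Proof.
move=> hA x [x0 hx].
by have [] := hx _ (@lin_closed _ _ b) hA.
Qed.

Theorem lemma2p1 (k : closedFieldType) (n : nat) (S : k -> 'M[k]_n)
  (X : 'rV[k]_n -> Prop) (b : 'cV[k]_n) (w : int) (f : 'rV[k]_n) (Phi : int) :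
  gm_action S -> proj_closed X -> S_invariant S X ->
  weight_vector S b w ->
  X f -> S_fixed S f -> weight_at S f Phi ->
  [/\ (Phi < w)%R -> lform b f = 0,
      (w < Phi)%R -> (forall x, zclosure (bb_stratum S X f) x -> lform b x = 0),
      (w = Phi ->
        forall b' : 'cV[k]_n, weight_vector S b' Phi ->
        exists lam mu : k, (lam != 0 \/ mu != 0) /\
          forall x, zclosure (bb_stratum S X f) x ->
            lam * lform b x + mu * lform b' x = 0)
    & lform b f != 0 -> forall x, bb_stratum S X f x -> lform b x != 0].
Proof.
move=> gS cX iX hb Xf fS wf.
have [f0 _] := fS.
have van : forall b'', weight_vector S b'' Phi -> lform b'' f = 0 ->
    forall x, zclosure (bb_stratum S X f) x -> lform b'' x = 0.
  move=> b'' hb'' bf; apply: closure_sub => x [Xx [x0 bl]]; split => //.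
  have [c [g [c0 [g0 hz]]]] := @strat_b _ _ _ _ _ _ b'' Phi gS fS wf bl hb''.
  have gc : g - (lform b'' x)%:P = 0.
    apply: nz_vanish => z z0; rewrite !hornerE.
    by rewrite (mulfI (expfz_neq0 Phi z0) (hz z z0)) subrr.
  have := congr1 (horner^~ 0) gc; rewrite !hornerE g0 bf mulr0 sub0r.
  by move/eqP; rewrite oppr_eq0 => /eqP.
split.
- move=> lt; apply/eqP; apply: contraT => bf.
  have e : w = Phi.
    apply: (@int_eq k) => y y0.
    have := @lformS _ _ S b w f y hb y0; rewrite wf // lformZ.
    by move/(mulIf bf).
  by move: lt; rewrite e ltxx.
- move=> lt; apply: closure_sub => x [Xx [x0 bl]]; split => //.
  have [c [g [c0 [g0 hz]]]] := @strat_b _ _ _ _ _ _ b w gS fS wf bl hb.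
  have d0 : 0 < Phi - w by rewrite subr_gt0.
  have hz' : forall z, z != 0 -> lform b x = z ^ (Phi - w) * g.[z].
    move=> z z0; apply: (mulfI (expfz_neq0 w z0)); rewrite hz // mulrA -expfzDr //.
    by rewrite addrC subrK.
  have [e e0 de] : exists2 e : nat, (0 < e)%N & Phi - w = e.
    by exists `|Phi - w|%N; rewrite ?absz_gt0 ?gtz0_abs // lt0r_neq0.
  rewrite de in hz'.
  have gc : 'X^e * g - (lform b x)%:P = 0.
    apply: nz_vanish => z z0; rewrite !hornerE (hz' z z0) -exprnP subrr //.
  have := congr1 (horner^~ 0) gc; rewrite !hornerE expr0n eqn0Ngt e0 mul0r sub0r.
  by move/eqP; rewrite oppr_eq0 => /eqP.
- move=> eP b' hb'; rewrite eP in hb.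
  have [bf|bf] := eqVneq (lform b f) 0.
    exists 1, 0; split; first by left; rewrite oner_eq0.
    by move=> x hx; rewrite mul0r addr0 mul1r (van b hb bf).
  exists (lform b' f), (- lform b f); split; first by right; rewrite oppr_eq0.
  move=> x hx; rewrite -lform_lin; apply: van => //; first exact: wv_lin.
  by rewrite lform_lin mulNr mulrC addrN.
- move=> bf x [Xx [x0 bl]]; apply: contra bf => /eqP bx.
  have [c [g [c0 [g0 hz]]]] := @strat_b _ _ _ _ _ _ b w gS fS wf bl hb.
  have gz : g = 0.
    apply: nz_vanish => z z0; apply: (mulfI (expfz_neq0 Phi z0)).
    by rewrite -hz // bx !mulr0.
  by move: g0; rewrite gz horner0 => /esym/eqP; rewrite mulf_eq0 (negbTE c0).
Qed.
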